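(* Let $S$ be a Stone relation algebra with at least one additional hypothesis, namely that $S$ satisfies the point axiom: the set $\mathrm{IP}(S)$ of ideal-points of $S$ is finite and non-empty and $\top = \bigsqcup \mathrm{IP}(S)$. Let $\mathrm{I}(S)$ be the set of ideals of $S$ and $\mathrm{M}(S) = \mathrm{I}(S)^{\mathrm{IP}(S)\times\mathrm{IP}(S)}$ the set of matrices indexed by $\mathrm{IP}(S)$ with entries in $\mathrm{I}(S)$. Then: (1) $\mathrm{M}(S)$ is a Stone relation algebra, where $\sqcup$, $\sqcap$, the pseudocomplement, $\bot$ and $\top$ are lifted componentwise from $\mathrm{I}(S)$, and composition, converse and identity are given by $(XY)_{p,q} = \bigsqcup\{X_{p,r}\sqcap Y_{r,q} \mid r\in\mathrm{IP}(S)\}$, $(X^{\smile})_{p,q} = X_{q,p}$, and $1_{p,q} = \top$ if $p=q$ and $1_{p,q}=\bot$ if $p\neq q$. (2) The functions $f : S\to\mathrm{M}(S)$, $f(x)_{p,q} = p^{\smile} x q$, and $g : \mathrm{M}(S)\to S$, $g(X) = \bigsqcup\{p\, X_{p,q}\, q^{\smile} \mid p,q\in\mathrm{IP}(S)\}$, are isomorphisms (of Stone relation algebras) between $S$ and $\mathrm{M}(S)$.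
   Context: A Stone relation algebra is a structure $(S,\sqcup,\sqcap,\cdot,\overline{\,\cdot\,},{}^{\smile},\bot,\top,1)$ (write $xy$ for $x\cdot y$, $\overline{x}$ for the pseudocomplement, $x^{\smile}$ for the converse) such that: $(S,\sqcup,\sqcap,\bot,\top)$ is a bounded distributive lattice with order $x\sqsubseteq y\iff x\sqcup y=y$; $x\sqcap y=\bot\iff x\sqsubseteq\overline{y}$ for all $x,y$; $\overline{x}\sqcup\overline{\overline{x}}=\top$; $\cdot$ is associative with two-sided unit $1$, distributes over $\sqcup$ on both sides, and $\bot$ is a zero of $\cdot$; $x^{\smile\smile}=x$, $(xy)^{\smile}=y^{\smile}x^{\smile}$, $(x\sqcup y)^{\smile}=x^{\smile}\sqcup y^{\smile}$; $\overline{\overline{1}}=1$; $\overline{\overline{xy}}=\overline{\overline{x}}\,\overline{\overline{y}}$; and $xy\sqcap z\sqsubseteq x(y\sqcap x^{\smile}z)$ for all $x,y,z$. For finite non-empty $P\subseteq S$, $\bigsqcup P$ is the join of its elements. An element $x$ is injective if $xx^{\smile}\sqsubseteq 1$, surjective if $1\sqsubseteq x^{\smile}x$, bijective if injective and surjective, a vector if $x\top=x$, a covector if $\top x=x$, a point if it is a bijective vector, and an ideal if it is both a vector and a covector. An ideal-point is a point $p$ such that for all points $q$ and all ideals $x\neq\bot$, $qx\sqsubseteq p$ implies $q\sqsubseteq p$. *)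

(* Defs.v *)
From Stdlib Require Import List ClassicalEpsilon.
Import ListNotations.
Set Implicit Arguments.

(** With [P := fun _ => True] this is exactly the paper's definition. *)
Record StoneRA_on (T : Type) (P : T -> Prop)
  (join meet comp : T -> T -> T) (pc conv : T -> T) (bot top one : T) : Prop := {
  cl_join : forall x y, P x -> P y -> P (join x y);
  cl_meet : forall x y, P x -> P y -> P (meet x y);
  cl_comp : forall x y, P x -> P y -> P (comp x y);
  cl_pc : forall x, P x -> P (pc x);
  cl_conv : forall x, P x -> P (conv x);
  cl_bot : P bot;
  cl_top : P top;
  cl_one : P one;
  join_assoc : forall x y z, P x -> P y -> P z -> join x (join y z) = join (join x y) z;
  meet_assoc : forall x y z, P x -> P y -> P z -> meet x (meet y z) = meet (meet x y) z;
  join_comm : forall x y, P x -> P y -> join x y = join y x;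
  meet_comm : forall x y, P x -> P y -> meet x y = meet y x;
  join_meet_absorb : forall x y, P x -> P y -> join x (meet x y) = x;
  meet_join_absorb : forall x y, P x -> P y -> meet x (join x y) = x;
  meet_join_distr : forall x y z, P x -> P y -> P z ->
      meet x (join y z) = join (meet x y) (meet x z);
  join_bot : forall x, P x -> join bot x = x;
  meet_top : forall x, P x -> meet top x = x;
  (* pseudocomplement (order: x <= y iff join x y = y) *)
  pc_spec : forall x y, P x -> P y -> (meet x y = bot <-> join x (pc y) = pc y);
  stone : forall x, P x -> join (pc x) (pc (pc x)) = top;
  comp_assoc : forall x y z, P x -> P y -> P z -> comp x (comp y z) = comp (comp x y) z;
  comp_one_l : forall x, P x -> comp one x = x;
  comp_one_r : forall x, P x -> comp x one = x;
  comp_join_distr_l : forall x y z, P x -> P y -> P z ->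
      comp x (join y z) = join (comp x y) (comp x z);
  comp_join_distr_r : forall x y z, P x -> P y -> P z ->
      comp (join x y) z = join (comp x z) (comp y z);
  comp_bot_l : forall x, P x -> comp bot x = bot;
  comp_bot_r : forall x, P x -> comp x bot = bot;
  conv_invol : forall x, P x -> conv (conv x) = x;
  conv_comp : forall x y, P x -> P y -> conv (comp x y) = comp (conv y) (conv x);
  conv_join : forall x y, P x -> P y -> conv (join x y) = join (conv x) (conv y);
  pc_pc_one : pc (pc one) = one;
  pc_pc_comp : forall x y, P x -> P y -> pc (pc (comp x y)) = comp (pc (pc x)) (pc (pc y));
  dedekind : forall x y z, P x -> P y -> P z ->
      join (meet (comp x y) z) (comp x (meet y (comp (conv x) z)))
      = comp x (meet y (comp (conv x) z))
}.

Record StoneRA := {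
  carrier :> Type;
  sjoin : carrier -> carrier -> carrier;
  smeet : carrier -> carrier -> carrier;
  scomp : carrier -> carrier -> carrier;
  spc : carrier -> carrier;
  sconv : carrier -> carrier;
  sbot : carrier;
  stop : carrier;
  sone : carrier;
  s_axioms : StoneRA_on (fun _ : carrier => True) sjoin smeet scomp spc sconv sbot stop sone
}.

Definition bigjoin (T : Type) (join : T -> T -> T) (bot : T) (l : list T) : T :=
  fold_right join bot l.

Section Elements.
Variable S : StoneRA.

Definition sle (x y : S) : Prop := sjoin S x y = y.
Definition injective_el (x : S) : Prop := sle (scomp S x (sconv S x)) (sone S).
Definition surjective_el (x : S) : Prop := sle (sone S) (scomp S (sconv S x) x).
Definition bijective_el (x : S) : Prop := injective_el x /\ surjective_el x.
Definition vector (x : S) : Prop := scomp S x (stop S) = x.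
Definition covector (x : S) : Prop := scomp S (stop S) x = x.
Definition point (x : S) : Prop := bijective_el x /\ vector x.
Definition ideal (x : S) : Prop := vector x /\ covector x.
Definition ideal_point (p : S) : Prop :=
  point p /\
  forall q x : S, point q -> ideal x -> x <> sbot S ->
    sle (scomp S q x) p -> sle q p.

Definition IPt : Type := { p : S | ideal_point p }.

Definition Mat : Type := IPt -> IPt -> S.
Definition in_M (X : Mat) : Prop := forall p q, ideal (X p q).

Definition Mjoin (X Y : Mat) : Mat := fun p q => sjoin S (X p q) (Y p q).
Definition Mmeet (X Y : Mat) : Mat := fun p q => smeet S (X p q) (Y p q).
Definition Mpc (X : Mat) : Mat := fun p q => spc S (X p q).
Definition Mbot : Mat := fun _ _ => sbot S.
Definition Mtop : Mat := fun _ _ => stop S.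
(** [l] is an enumeration of IP(S). *)
Definition Mcomp (l : list IPt) (X Y : Mat) : Mat :=
  fun p q => bigjoin (sjoin S) (sbot S) (map (fun r => smeet S (X p r) (Y r q)) l).
Definition Mconv (X : Mat) : Mat := fun p q => X q p.
Definition Mone : Mat :=
  fun p q => if excluded_middle_informative (p = q) then stop S else sbot S.

Definition fmat (x : S) : Mat :=
  fun p q => scomp S (scomp S (sconv S (proj1_sig p)) x) (proj1_sig q).
Definition gmat (l : list IPt) (X : Mat) : S :=
  bigjoin (sjoin S) (sbot S)
    (map (fun pq => scomp S (scomp S (proj1_sig (fst pq)) (X (fst pq) (snd pq)))
                           (sconv S (proj1_sig (snd pq))))
         (list_prod l l)).

End Elements.

Definition StoneRA_hom (T U : Type) (P : T -> Prop)
  (join1 meet1 comp1 : T -> T -> T) (pc1 conv1 : T -> T) (bot1 top1 one1 : T)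
  (join2 meet2 comp2 : U -> U -> U) (pc2 conv2 : U -> U) (bot2 top2 one2 : U)
  (h : T -> U) : Prop :=
  (forall x y, P x -> P y -> h (join1 x y) = join2 (h x) (h y)) /\
  (forall x y, P x -> P y -> h (meet1 x y) = meet2 (h x) (h y)) /\
  (forall x y, P x -> P y -> h (comp1 x y) = comp2 (h x) (h y)) /\
  (forall x, P x -> h (pc1 x) = pc2 (h x)) /\
  (forall x, P x -> h (conv1 x) = conv2 (h x)) /\
  h bot1 = bot2 /\ h top1 = top2 /\ h one1 = one2.

(* Main.v *)
Require Import Defs.
From Stdlib Require Import List Classical ClassicalEpsilon FunctionalExtensionality ProofIrrelevance.
Import ListNotations.

Section Alg.
Variable S : StoneRA.
Local Infix "⊔" := (sjoin S) (at level 50, left associativity).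
Local Infix "⊓" := (smeet S) (at level 40, left associativity).
Local Infix "⋅" := (scomp S) (at level 31, left associativity).
Local Notation cv := (sconv S).
Local Notation pc := (spc S).
Local Notation bot := (sbot S).
Local Notation top := (stop S).
Local Notation one := (sone S).
Local Notation "x ⊑ y" := (@sle S x y) (at level 70).
Local Notation ax := (s_axioms S).

Lemma jA (x y z : S) : x ⊔ (y ⊔ z) = x ⊔ y ⊔ z. Proof. exact (join_assoc ax x y z I I I). Qed.
Lemma mA (x y z : S) : x ⊓ (y ⊓ z) = x ⊓ y ⊓ z. Proof. exact (meet_assoc ax x y z I I I). Qed.
Lemma jC (x y : S) : x ⊔ y = y ⊔ x. Proof. exact (join_comm ax x y I I). Qed.
Lemma mC (x y : S) : x ⊓ y = y ⊓ x. Proof. exact (meet_comm ax x y I I). Qed.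
Lemma jmab (x y : S) : x ⊔ (x ⊓ y) = x. Proof. exact (join_meet_absorb ax x y I I). Qed.
Lemma mjab (x y : S) : x ⊓ (x ⊔ y) = x. Proof. exact (meet_join_absorb ax x y I I). Qed.
Lemma mjD (x y z : S) : x ⊓ (y ⊔ z) = x ⊓ y ⊔ x ⊓ z. Proof. exact (meet_join_distr ax x y z I I I). Qed.
Lemma jbot (x : S) : bot ⊔ x = x. Proof. exact (join_bot ax x I). Qed.
Lemma mtop (x : S) : top ⊓ x = x. Proof. exact (meet_top ax x I). Qed.
Lemma pcS (x y : S) : x ⊓ y = bot <-> x ⊔ pc y = pc y. Proof. exact (pc_spec ax x y I I). Qed.
Lemma cA (x y z : S) : x ⋅ (y ⋅ z) = x ⋅ y ⋅ z. Proof. exact (comp_assoc ax x y z I I I). Qed.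
Lemma c1l (x : S) : one ⋅ x = x. Proof. exact (comp_one_l ax x I). Qed.
Lemma c1r (x : S) : x ⋅ one = x. Proof. exact (comp_one_r ax x I). Qed.
Lemma cDl (x y z : S) : x ⋅ (y ⊔ z) = x ⋅ y ⊔ x ⋅ z. Proof. exact (comp_join_distr_l ax x y z I I I). Qed.
Lemma cDr (x y z : S) : (x ⊔ y) ⋅ z = x ⋅ z ⊔ y ⋅ z. Proof. exact (comp_join_distr_r ax x y z I I I). Qed.
Lemma cbl (x : S) : bot ⋅ x = bot. Proof. exact (comp_bot_l ax x I). Qed.
Lemma cbr (x : S) : x ⋅ bot = bot. Proof. exact (comp_bot_r ax x I). Qed.
Lemma cvv (x : S) : cv (cv x) = x. Proof. exact (conv_invol ax x I). Qed.
Lemma cvc (x y : S) : cv (x ⋅ y) = cv y ⋅ cv x. Proof. exact (conv_comp ax x y I I). Qed.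
Lemma cvj (x y : S) : cv (x ⊔ y) = cv x ⊔ cv y. Proof. exact (conv_join ax x y I I). Qed.
Lemma ded_le (x y z : S) : x ⋅ y ⊓ z ⊑ x ⋅ (y ⊓ cv x ⋅ z). Proof. exact (dedekind ax x y z I I I). Qed.

Lemma jI (x : S) : x ⊔ x = x.
Proof. transitivity (x ⊔ (x ⊓ (x ⊔ x))). rewrite mjab; reflexivity. apply jmab. Qed.
Lemma mI (x : S) : x ⊓ x = x.
Proof. transitivity (x ⊓ (x ⊔ (x ⊓ x))). rewrite jmab; reflexivity. apply mjab. Qed.
Lemma le_refl (x : S) : x ⊑ x. Proof. apply jI. Qed.
Lemma le_trans (x y z : S) : x ⊑ y -> y ⊑ z -> x ⊑ z.
Proof. unfold sle; intros H1 H2. rewrite <- H2, jA, H1. reflexivity. Qed.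
Lemma le_antisym (x y : S) : x ⊑ y -> y ⊑ x -> x = y.
Proof. unfold sle; intros H1 H2. rewrite <- H2, jC. exact H1. Qed.
Lemma le_meet (x y : S) : x ⊑ y <-> x ⊓ y = x.
Proof. split; intro H. unfold sle in H. rewrite <- H. apply mjab.
  unfold sle. rewrite <- H. rewrite jC, mC. apply jmab. Qed.
Lemma join_ub_l (x y : S) : x ⊑ x ⊔ y. Proof. unfold sle. rewrite jA, jI. reflexivity. Qed.
Lemma join_ub_r (x y : S) : y ⊑ x ⊔ y. Proof. unfold sle. rewrite (jC x y), jA, jI. reflexivity. Qed.
Lemma join_lub (x y z : S) : x ⊑ z -> y ⊑ z -> x ⊔ y ⊑ z.
Proof. unfold sle; intros H H0. rewrite <- jA, H0. exact H. Qed.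
Lemma meet_lb_l (x y : S) : x ⊓ y ⊑ x.
Proof. apply le_meet. rewrite (mC (x ⊓ y) x), mA, mI. reflexivity. Qed.
Lemma meet_lb_r (x y : S) : x ⊓ y ⊑ y.
Proof. rewrite mC. apply meet_lb_l. Qed.
Lemma meet_glb (x y z : S) : z ⊑ x -> z ⊑ y -> z ⊑ x ⊓ y.
Proof. intros H H0. apply le_meet. rewrite mA, (proj1 (le_meet _ _) H), (proj1 (le_meet _ _) H0). reflexivity. Qed.
Lemma bot_le (x : S) : bot ⊑ x. Proof. apply jbot. Qed.
Lemma le_top (x : S) : x ⊑ top. Proof. apply le_meet. rewrite mC. apply mtop. Qed.
Lemma le_bot (x : S) : x ⊑ bot -> x = bot. Proof. unfold sle. rewrite jC, jbot. auto. Qed.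
Lemma jbot_r (x : S) : x ⊔ bot = x. Proof. rewrite jC. apply jbot. Qed.
Lemma mbot (x : S) : bot ⊓ x = bot. Proof. apply le_meet, bot_le. Qed.
Lemma comp_mono_l (x y z : S) : x ⊑ y -> x ⋅ z ⊑ y ⋅ z.
Proof. unfold sle; intro H. rewrite <- cDr, H. reflexivity. Qed.
Lemma comp_mono_r (x y z : S) : x ⊑ y -> z ⋅ x ⊑ z ⋅ y.
Proof. unfold sle; intro H. rewrite <- cDl, H. reflexivity. Qed.
Lemma comp_mono (x y x' y' : S) : x ⊑ x' -> y ⊑ y' -> x ⋅ y ⊑ x' ⋅ y'.
Proof. intros. eapply le_trans. apply comp_mono_l; eassumption. apply comp_mono_r; assumption. Qed.
Lemma meet_mono (x y x' y' : S) : x ⊑ x' -> y ⊑ y' -> x ⊓ y ⊑ x' ⊓ y'.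
Proof. intros. apply meet_glb. eapply le_trans. apply meet_lb_l. auto.
  eapply le_trans. apply meet_lb_r. auto. Qed.
Lemma join_mono (x y x' y' : S) : x ⊑ x' -> y ⊑ y' -> x ⊔ y ⊑ x' ⊔ y'.
Proof. intros. apply join_lub. eapply le_trans. eassumption. apply join_ub_l.
  eapply le_trans. eassumption. apply join_ub_r. Qed.
Lemma cv_mono (x y : S) : x ⊑ y -> cv x ⊑ cv y.
Proof. unfold sle; intro H. rewrite <- cvj, H. reflexivity. Qed.
Lemma cv_top : cv top = top.
Proof. apply le_antisym. apply le_top. rewrite <- (cvv top) at 1. apply cv_mono, le_top. Qed.
Lemma cv_bot : cv bot = bot.
Proof. apply le_bot. rewrite <- (cvv bot) at 2. apply cv_mono, bot_le. Qed.
Lemma cv_meet (x y : S) : cv (x ⊓ y) = cv x ⊓ cv y.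
Proof.
  assert (H : forall a b : S, cv (a ⊓ b) ⊑ cv a ⊓ cv b).
  { intros. apply meet_glb; apply cv_mono. apply meet_lb_l. apply meet_lb_r. }
  apply le_antisym. apply H.
  rewrite <- (cvv (cv x ⊓ cv y)). apply cv_mono. rewrite <- (cvv x) at 2. rewrite <- (cvv y) at 2. apply H.
Qed.
Lemma ded2 (x y z : S) : y ⋅ x ⊓ z ⊑ (y ⊓ z ⋅ cv x) ⋅ x.
Proof.
  pose proof (cv_mono _ _ (ded_le (cv x) (cv y) (cv z))) as H.
  rewrite cv_meet, !cvc, !cv_meet, !cvc, !cvv in H. exact H.
Qed.
Lemma x_le_xxx (x : S) : x ⊑ x ⋅ cv x ⋅ x.
Proof.
  pose proof (ded_le x one x) as H. rewrite c1r, mI in H.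
  eapply le_trans. exact H. rewrite <- cA. apply comp_mono_r, meet_lb_r.
Qed.
Lemma top_top : top ⋅ top = top.
Proof. apply le_antisym. apply le_top. rewrite <- (c1r top) at 1. apply comp_mono_r, le_top. Qed.

Lemma ideal_le_cv (a : S) : ideal S a -> a ⊑ cv a.
Proof.
  intros [Hv Hc]. unfold vector, covector in *.
  assert (E : cv a = top ⋅ cv a ⋅ top).
  { transitivity (cv (top ⋅ a ⋅ top)). rewrite Hc, Hv; reflexivity.
    rewrite !cvc, cv_top, cA. reflexivity. }
  rewrite E. eapply le_trans. apply x_le_xxx.
  apply comp_mono. apply comp_mono. apply le_top. apply le_refl. apply le_top.
Qed.
Lemma ideal_cv_ideal (a : S) : ideal S a -> ideal S (cv a).
Proof.
  intros [Hv Hc]. unfold ideal, vector, covector in *. split.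
  rewrite <- cv_top, <- cvc, Hc. reflexivity.
  rewrite <- cv_top, <- cvc, Hv. reflexivity.
Qed.
Lemma ideal_cv (a : S) : ideal S a -> cv a = a.
Proof.
  intro H. apply le_antisym.
  rewrite <- (cvv a) at 2. apply ideal_le_cv, ideal_cv_ideal, H.
  apply ideal_le_cv, H.
Qed.
Lemma ideal_meet (a b : S) : vector S a -> covector S b -> a ⊓ b = a ⋅ b.
Proof.
  unfold vector, covector; intros Ha Hb. apply le_antisym.
  - assert (E : a ⊓ b = a ⋅ one ⊓ b) by (rewrite c1r; reflexivity). rewrite E.
    eapply le_trans. apply ded_le. apply comp_mono_r.
    eapply le_trans. apply meet_lb_r. rewrite <- Hb at 2. apply comp_mono_l, le_top.
  - apply meet_glb.
    + rewrite <- Ha at 2. apply comp_mono_r, le_top.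
    + rewrite <- Hb at 2. apply comp_mono_l, le_top.
Qed.
Lemma pc_disj (x : S) : pc x ⊓ x = bot.
Proof. apply pcS. apply jI. Qed.
Lemma pc_ideal (a : S) : ideal S a -> ideal S (pc a).
Proof.
  intros [Hv Hc]. unfold ideal, vector, covector in *. split.
  - apply le_antisym.
    + apply pcS. apply le_bot. eapply le_trans. apply ded2.
      rewrite cv_top, Hv, pc_disj, cbl. apply le_refl.
    + rewrite <- (c1r (pc a)) at 1. apply comp_mono_r, le_top.
  - apply le_antisym.
    + apply pcS. apply le_bot. eapply le_trans. apply ded_le.
      rewrite cv_top, Hc, pc_disj, cbr. apply le_refl.
    + rewrite <- (c1l (pc a)) at 1. apply comp_mono_l, le_top.
Qed.

Local Notation Bj := (bigjoin (sjoin S) (sbot S)).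
Lemma Bj_cons (x : S) l : Bj (x :: l) = x ⊔ Bj l. Proof. reflexivity. Qed.
Lemma Bj_nil : Bj [] = bot. Proof. reflexivity. Qed.
Lemma Bj_app (l1 l2 : list S) : Bj (l1 ++ l2) = Bj l1 ⊔ Bj l2.
Proof. induction l1; simpl app; rewrite ?Bj_cons, ?Bj_nil. rewrite jbot; reflexivity.
  rewrite IHl1, jA; reflexivity. Qed.
Lemma Bj_compl {A} (a : S) (F : A -> S) l : a ⋅ Bj (map F l) = Bj (map (fun r => a ⋅ F r) l).
Proof. induction l; simpl map; rewrite ?Bj_cons, ?Bj_nil. apply cbr. rewrite cDl, IHl; reflexivity. Qed.
Lemma Bj_compr {A} (a : S) (F : A -> S) l : Bj (map F l) ⋅ a = Bj (map (fun r => F r ⋅ a) l).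
Proof. induction l; simpl map; rewrite ?Bj_cons, ?Bj_nil. apply cbl. rewrite cDr, IHl; reflexivity. Qed.
Lemma Bj_meetl {A} (a : S) (F : A -> S) l : a ⊓ Bj (map F l) = Bj (map (fun r => a ⊓ F r) l).
Proof. induction l; simpl map; rewrite ?Bj_cons, ?Bj_nil. rewrite mC; apply mbot. rewrite mjD, IHl; reflexivity. Qed.
Lemma Bj_ub {A} (F : A -> S) l r : In r l -> F r ⊑ Bj (map F l).
Proof. induction l; simpl; intros H. destruct H.
  destruct H as [<-|H]. apply join_ub_l. eapply le_trans. apply IHl, H. apply join_ub_r. Qed.
Lemma Bj_lub {A} (F : A -> S) l z : (forall r, In r l -> F r ⊑ z) -> Bj (map F l) ⊑ z.
Proof. induction l; simpl map; rewrite ?Bj_cons, ?Bj_nil; intros H. apply bot_le.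
  apply join_lub. apply H; left; reflexivity. apply IHl; intros; apply H; right; assumption. Qed.
Lemma Bj_mono {A} (F G : A -> S) l : (forall r, F r ⊑ G r) -> Bj (map F l) ⊑ Bj (map G l).
Proof. intro H. induction l; simpl map; rewrite ?Bj_cons, ?Bj_nil. apply le_refl.
  apply join_mono; auto. Qed.
Lemma Bj_prod {A B} (G : A * B -> S) l1 l2 :
  Bj (map G (list_prod l1 l2)) = Bj (map (fun a => Bj (map (fun b => G (a, b)) l2)) l1).
Proof. induction l1. reflexivity.
  change (list_prod (a :: l1) l2) with (map (fun y => (a, y)) l2 ++ list_prod l1 l2).
  rewrite map_app, Bj_app, map_map, IHl1. reflexivity. Qed.

Local Notation IP := (IPt S).
Lemma ip_inj (r : IP) : proj1_sig r ⋅ cv (proj1_sig r) ⊑ one.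
Proof. destruct (proj2_sig r) as [[[Hi Hs] Hv] _]. exact Hi. Qed.
Lemma ip_surj (r : IP) : one ⊑ cv (proj1_sig r) ⋅ proj1_sig r.
Proof. destruct (proj2_sig r) as [[[Hi Hs] Hv] _]. exact Hs. Qed.
Lemma ip_vec (r : IP) : proj1_sig r ⋅ top = proj1_sig r.
Proof. destruct (proj2_sig r) as [[[Hi Hs] Hv] _]. exact Hv. Qed.
Lemma ip_cov_cv (r : IP) : top ⋅ cv (proj1_sig r) = cv (proj1_sig r).
Proof. rewrite <- cv_top, <- cvc, ip_vec. reflexivity. Qed.
Lemma ptpt (p q : IP) : ideal S (cv (proj1_sig p) ⋅ proj1_sig q).
Proof. split; unfold vector, covector. rewrite <- cA, ip_vec; reflexivity.
  rewrite cA, ip_cov_cv; reflexivity. Qed.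
Lemma ptp_top (p : IP) : cv (proj1_sig p) ⋅ proj1_sig p = top.
Proof.
  apply le_antisym. apply le_top.
  destruct (ptpt p p) as [Hv Hc]. unfold vector, covector in *.
  rewrite <- Hv, <- Hc. rewrite <- top_top at 1. rewrite <- (c1r top) at 1.
  apply comp_mono_l, comp_mono_r, ip_surj.
Qed.
Lemma pt_cases (p q : IP) : p = q \/ cv (proj1_sig p) ⋅ proj1_sig q = bot.
Proof.
  destruct (classic (cv (proj1_sig p) ⋅ proj1_sig q = bot)) as [H|H]; [right; exact H | left].
  assert (Hpq : proj1_sig p ⊑ proj1_sig q).
  { apply (proj2 (proj2_sig q) (proj1_sig p) _ (proj1 (proj2_sig p)) (ptpt p q) H).
    rewrite cA. rewrite <- (c1l (proj1_sig q)) at 2. apply comp_mono_l, ip_inj. }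
  assert (Hqp : proj1_sig q ⊑ proj1_sig p).
  { rewrite <- ip_vec, <- (ptp_top p), cA. rewrite <- (c1l (proj1_sig p)) at 3.
    apply comp_mono_l. eapply le_trans; [|apply (ip_inj q)].
    apply comp_mono_r, cv_mono, Hpq. }
  pose proof (le_antisym _ _ Hpq Hqp) as E.
  destruct p as [p hp], q as [q hq]; simpl in *. subst. f_equal. apply proof_irrelevance.
Qed.
Lemma bigpp (l : list IP) : stop S = Bj (map (@proj1_sig S (@ideal_point S)) l) ->
  Bj (map (fun r => proj1_sig r ⋅ cv (proj1_sig r)) l) = one.
Proof.
  intro Ht. apply le_antisym.
  - apply Bj_lub. intros; apply ip_inj.
  - rewrite <- (mtop one), mC, Ht, Bj_meetl. apply Bj_mono. intro r.
    rewrite mC. rewrite <- (c1r (proj1_sig r)) at 1.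
    eapply le_trans. apply ded_le. rewrite c1r. apply comp_mono_r, meet_lb_r.
Qed.

Lemma fmat_ideal (x : S) (p q : IP) : ideal S (fmat x p q).
Proof. unfold fmat. split; unfold vector, covector.
  rewrite <- cA, ip_vec; reflexivity. rewrite !cA, ip_cov_cv; reflexivity. Qed.
Lemma in_M_f (x : S) : in_M (fmat x).
Proof. intros p q. apply fmat_ideal. Qed.

Ltac ext := let p := fresh "p" in let q := fresh "q" in
  apply functional_extensionality; intro p; apply functional_extensionality; intro q.

Lemma F_join (x y : S) : fmat (x ⊔ y) = Mjoin (fmat x) (fmat y).
Proof. ext. unfold fmat, Mjoin. rewrite cDl, cDr. reflexivity. Qed.
Lemma uni_meet (p : IP) (y z : S) : cv (proj1_sig p) ⋅ (y ⊓ z) = cv (proj1_sig p) ⋅ y ⊓ cv (proj1_sig p) ⋅ z.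
Proof. apply le_antisym.
  - apply meet_glb; apply comp_mono_r. apply meet_lb_l. apply meet_lb_r.
  - eapply le_trans. apply ded_le. rewrite cvv. apply comp_mono_r, meet_mono. apply le_refl.
    rewrite cA. rewrite <- (c1l z) at 2. apply comp_mono_l, ip_inj.
Qed.
Lemma inj_meet (q : IP) (y z : S) : (y ⊓ z) ⋅ proj1_sig q = y ⋅ proj1_sig q ⊓ z ⋅ proj1_sig q.
Proof. apply le_antisym.
  - apply meet_glb; apply comp_mono_l. apply meet_lb_l. apply meet_lb_r.
  - eapply le_trans. apply ded2. apply comp_mono_l, meet_mono. apply le_refl.
    rewrite <- cA. rewrite <- (c1r z) at 2. apply comp_mono_r, ip_inj.
Qed.
Lemma F_meet (x y : S) : fmat (x ⊓ y) = Mmeet (fmat x) (fmat y).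
Proof. ext. unfold fmat, Mmeet. rewrite uni_meet, inj_meet. reflexivity. Qed.
Lemma F_conv (x : S) : fmat (cv x) = Mconv (fmat x).
Proof. ext. unfold Mconv. rewrite <- (ideal_cv _ (fmat_ideal x q p)). unfold fmat.
  rewrite !cvc, cvv, cA. reflexivity. Qed.
Lemma F_bot : fmat bot = @Mbot S.
Proof. ext. unfold fmat, Mbot. rewrite cbr, cbl. reflexivity. Qed.
Lemma F_top : fmat top = @Mtop S.
Proof. ext. unfold fmat, Mtop. apply le_antisym. apply le_top.
  apply le_trans with ((cv (proj1_sig p) ⋅ proj1_sig p) ⋅ (cv (proj1_sig q) ⋅ proj1_sig q)).
  rewrite !ptp_top, top_top. apply le_refl.
  rewrite !cA. apply comp_mono_l. rewrite <- cA. apply comp_mono_r, le_top. Qed.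
Lemma F_one : fmat one = @Mone S.
Proof. ext. unfold fmat, Mone. rewrite c1r.
  destruct (excluded_middle_informative (p = q)) as [<-|n]. apply ptp_top.
  destruct (pt_cases p q) as [e|e]. contradiction. exact e. Qed.
Lemma F_comp (l : list IP) : stop S = Bj (map (@proj1_sig S (@ideal_point S)) l) ->
  forall x y : S, fmat (x ⋅ y) = Mcomp l (fmat x) (fmat y).
Proof. intros Ht x y. ext. unfold Mcomp.
  transitivity (cv (proj1_sig p) ⋅ x ⋅ Bj (map (fun r => proj1_sig r ⋅ cv (proj1_sig r)) l) ⋅ (y ⋅ proj1_sig q)).
  { rewrite bigpp by exact Ht. rewrite c1r. unfold fmat. rewrite !cA. reflexivity. }
  rewrite Bj_compl, Bj_compr. f_equal. apply map_ext. intro r.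
  rewrite (ideal_meet _ _ (proj1 (fmat_ideal x p r)) (proj2 (fmat_ideal y r q))).
  unfold fmat. rewrite !cA. reflexivity.
Qed.
Lemma gf (l : list IP) : stop S = Bj (map (@proj1_sig S (@ideal_point S)) l) ->
  forall x : S, gmat l (fmat x) = x.
Proof. intros Ht x. unfold gmat. rewrite Bj_prod.
  transitivity (Bj (map (fun a => Bj (map (fun b => proj1_sig a ⋅ cv (proj1_sig a) ⋅ x ⋅ (proj1_sig b ⋅ cv (proj1_sig b))) l)) l)).
  { f_equal; apply map_ext; intro a; f_equal; apply map_ext; intro b. simpl. unfold fmat. rewrite !cA. reflexivity. }
  transitivity (Bj (map (fun a => proj1_sig a ⋅ cv (proj1_sig a) ⋅ x) l)).
  { f_equal; apply map_ext; intro a. rewrite <- Bj_compl, bigpp by exact Ht. apply c1r. }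
  transitivity (Bj (map (fun a => proj1_sig a ⋅ cv (proj1_sig a)) l) ⋅ x).
  rewrite Bj_compr; reflexivity. rewrite bigpp by exact Ht. apply c1l.
Qed.
Lemma fg (l : list IP) : (forall p : IP, In p l) ->
  forall X : Mat S, in_M X -> fmat (gmat l X) = X.
Proof. intros Hall X HX. ext. unfold fmat, gmat. rewrite Bj_compl, Bj_compr.
  destruct (HX p q) as [Hv Hc]. unfold vector, covector in Hv, Hc.
  apply le_antisym.
  - apply Bj_lub. intros [r s] _. simpl. rewrite !cA.
    destruct (pt_cases p r) as [<-|E].
    2:{ rewrite E, !cbl. apply bot_le. }
    destruct (pt_cases q s) as [<-|E].
    2:{ assert (E' : cv (proj1_sig s) ⋅ proj1_sig q = bot).
        { rewrite <- (cvv (proj1_sig q)), <- cvc, E, cv_bot. reflexivity. }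
        rewrite <- (cA _ (cv (proj1_sig s)) (proj1_sig q)), E', cbr. apply bot_le. }
    rewrite ptp_top, <- (cA _ (cv (proj1_sig q)) (proj1_sig q)), ptp_top, Hc, Hv. apply le_refl.
  - assert (Hin : In (p, q) (list_prod l l)) by (apply in_prod; apply Hall).
    eapply le_trans; [| exact (Bj_ub _ _ _ Hin)]. simpl. rewrite !cA.
    rewrite ptp_top, <- (cA _ (cv (proj1_sig q)) (proj1_sig q)), ptp_top, Hc, Hv. apply le_refl.
Qed.
Lemma f_inj (l : list IP) : stop S = Bj (map (@proj1_sig S (@ideal_point S)) l) ->
  forall a b : S, fmat a = fmat b -> a = b.
Proof. intros Ht a b H. rewrite <- (gf l Ht a), <- (gf l Ht b), H. reflexivity. Qed.
Lemma F_pc (l : list IP) : (forall p : IP, In p l) -> stop S = Bj (map (@proj1_sig S (@ideal_point S)) l) ->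
  forall x : S, fmat (pc x) = Mpc (fmat x).
Proof. intros Hall Ht x.
  assert (HZ : in_M (Mpc (fmat x))) by (intros p q; apply pc_ideal, fmat_ideal).
  pose proof (fg l Hall _ HZ) as Ez. set (z := gmat l (Mpc (fmat x))) in *.
  assert (H1 : z ⊑ pc x).
  { apply pcS. apply (f_inj l Ht). rewrite F_meet, Ez, F_bot. ext. unfold Mmeet, Mpc, Mbot. apply pc_disj. }
  assert (H2 : pc x ⊑ z).
  { unfold sle. apply (f_inj l Ht). rewrite F_join, Ez. ext. unfold Mjoin, Mpc. apply pcS.
    transitivity (fmat (pc x ⊓ x) p q). rewrite F_meet; reflexivity. rewrite pc_disj, F_bot; reflexivity. }
  rewrite (le_antisym _ _ H2 H1). exact Ez.
Qed.
End Alg.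

Theorem mainTheorem1 (S : StoneRA) (l : list (IPt S)) :
  (forall p : IPt S, In p l) ->
  l <> [] ->
  stop S = bigjoin (sjoin S) (sbot S) (map (@proj1_sig S (@ideal_point S)) l) ->
  StoneRA_on (@in_M S) (@Mjoin S) (@Mmeet S) (Mcomp l) (@Mpc S) (@Mconv S)
             (@Mbot S) (@Mtop S) (@Mone S) /\
  (forall x : S, in_M (fmat x)) /\
  StoneRA_hom (fun _ : S => True)
    (sjoin S) (smeet S) (scomp S) (spc S) (sconv S) (sbot S) (stop S) (sone S)
    (@Mjoin S) (@Mmeet S) (Mcomp l) (@Mpc S) (@Mconv S) (@Mbot S) (@Mtop S) (@Mone S)
    (@fmat S) /\
  StoneRA_hom (@in_M S)
    (@Mjoin S) (@Mmeet S) (Mcomp l) (@Mpc S) (@Mconv S) (@Mbot S) (@Mtop S) (@Mone S)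
    (sjoin S) (smeet S) (scomp S) (spc S) (sconv S) (sbot S) (stop S) (sone S)
    (gmat l) /\
  (forall x : S, gmat l (fmat x) = x) /\
  (forall X : Mat S, in_M X -> fmat (gmat l X) = X).
Proof.
  intros Hall _ Ht.
  assert (surj : forall X : Mat S, in_M X -> exists x, X = fmat x).
  { intros X HX. exists (gmat l X). symmetry. apply fg; assumption. }
  pose proof (F_comp S l Ht) as Fc. pose proof (F_pc S l Hall Ht) as Fp.
  pose proof (f_inj S l Ht) as Fi. pose proof (gf S l Ht) as GF.
  Ltac lift surj Fc Fp :=
    repeat match goal with H : in_M ?X |- _ =>
      let x := fresh "x" in destruct (surj X H) as [x ->]; clear H end;
    repeat (rewrite <- ?F_join, <- ?F_meet, <- ?Fc, <- ?Fp, <- ?F_conv,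
             <- ?F_bot, <- ?F_top, <- ?F_one).
  pose proof (s_axioms S) as A.
  split; [|split; [|split; [|split; [|split]]]].
  - constructor; intros; lift surj Fc Fp; try apply in_M_f.
    all: try (split; intro H; [apply f_equal, pcS, Fi, H | apply f_equal, pcS, Fi, H]).
    all: f_equal; first [ apply jA | apply mA | apply jmab | apply mjab | apply mjD | apply jbot
      | apply mtop | apply cA | apply c1l | apply c1r | apply cDl | apply cDr | apply cbl | apply cbr
      | apply cvv | apply cvc | apply cvj | apply jC | apply mC | exact (stone A _ I)
      | exact (pc_pc_one A) | exact (pc_pc_comp A _ _ I I) | apply ded_le ].
  - apply in_M_f.
  - repeat split; intros.
    apply F_join. apply F_meet. apply Fc. apply Fp. apply F_conv. apply F_bot. apply F_top. apply F_one.
  - repeat split; intros; lift surj Fc Fp; rewrite ?GF; reflexivity.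
  - exact GF.
  - apply fg; assumption.
Qed.
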